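(* Let $n\ge 2$ be a power of $2$, let $f\colon\{0,1\}^n\to\{0,1,*\}$ be a partial function and let $x\in f^{-1}( * )$. Then there exists a total function $g\colon\{0,1\}^{N}\to\{0,1\}$ with $N\le 3n^2\log_2^2 n$ such that \[ \mathrm{C}_0(g)\;\ge\;\min\{\mathrm{C}_{\bar 0}(f,x),\,\mathrm{C}_{\bar 1}(f,x)\}\qquad\text{and}\qquad \mathrm{UC}_1(g)\;\le\;3\,\mathrm{C}(f)\log_2^2 n. \]
   Context: For a partial function $f\colon\{0,1\}^n\to\{0,1,*\}$ (inputs with value $*$ are ''undefined''): a partial input $\rho\in\{0,1,*\}^n$ is consistent with $x\in\{0,1\}^n$ if $\rho_i=x_i$ whenever $\rho_i\neq *$; its size $|\rho|$ is the number of non-$*$ entries. For $\Sigma\subseteq\{0,1,*\}$, $\rho$ is a $\Sigma$-certificate for $x$ if $\rho$ is consistent with $x$ and $f(x')\in\Sigma$ for every $x'$ consistent with $\rho$. $\mathrm{C}_\Sigma(f,x)$ is the least size of a $\Sigma$-certificate for $x$, and $\mathrm{C}_\Sigma(f)=\max_{x\in f^{-1}(\Sigma)}\mathrm{C}_\Sigma(f,x)$. We write $0,1,\bar0,\bar1$ for $\Sigma=\{0\},\{1\},\{1,*\},\{0,*\}$ respectively, and $\mathrm{C}(f)=\max\{\mathrm{C}_0(f),\mathrm{C}_1(f)\}$. For a total function $g$, $\mathrm{C}_0(g)$ equals the least $k$ such that $g$ is a width-$k$ CNF, and $\mathrm{UC}_1(g)$ is the least $k$ such that $g$ can be written as an unambiguous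 width-$k$ DNF (a DNF in which every input satisfies at most one term; width = maximum number of literals in a term). *)

(* Defs.v *)
From mathcomp Require Import all_boot.
Set Implicit Arguments. Unset Strict Implicit. Unset Printing Implicit Defensive.

(* Inputs {0,1}^n are finite functions 'I_n -> bool.
   Values {0,1,*} are option bool: Some false = 0, Some true = 1, None = *.
   Partial inputs {0,1,*}^n are finite functions 'I_n -> option bool. *)
Definition input n := {ffun 'I_n -> bool}.
Definition pinput n := {ffun 'I_n -> option bool}.

Definition consistent n (rho : pinput n) (x : input n) : bool :=
  [forall i, if rho i is Some b then x i == b else true].

Definition psize n (rho : pinput n) : nat := #|[set i | rho i != None]|.

Definition is_cert n (f : input n -> option bool) (Sig : pred (option bool))
    (rho : pinput n) (x : input n) : bool :=
  consistent rho x && [forall x' : input n, consistent rho x' ==> Sig (f x')].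

(* C_Sigma(f,x): least size of a Sigma-certificate for x (default n is never
   reached when f x \in Sigma, since the full assignment is a certificate). *)
Definition Cx n (f : input n -> option bool) (Sig : pred (option bool)) (x : input n) : nat :=
  \big[minn/n]_(rho : pinput n | is_cert f Sig rho x) psize rho.

Definition Cf n (f : input n -> option bool) (Sig : pred (option bool)) : nat :=
  \max_(x : input n | Sig (f x)) Cx f Sig x.

Definition S0 : pred (option bool) := pred1 (Some false).
Definition S1 : pred (option bool) := pred1 (Some true).
Definition Sbar0 : pred (option bool) := [pred v | v != Some false].
Definition Sbar1 : pred (option bool) := [pred v | v != Some true].

Definition Cmax n (f : input n -> option bool) : nat := maxn (Cf f S0) (Cf f S1).

Definition as_partial N (g : input N -> bool) : input N -> option bool := fun x => Some (g x).

Definition C0 N (g : input N -> bool) : nat := Cf (as_partial g) S0.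

(* DNFs: a set of terms, each term a partial input (its literals are the
   non-* entries); an input satisfies a term iff it is consistent with it. *)
Definition dnf_width N (D : {set pinput N}) : nat := \max_(t in D) psize t.

Definition is_unamb_dnf_for N (g : input N -> bool) (D : {set pinput N}) : bool :=
  [forall x : input N,
     (g x == [exists t in D, consistent t x]) &&
     (#|[set t in D | consistent t x]| <= 1)].

(* UC_1(g): least width of an unambiguous DNF computing g (default N is never
   reached: the DNF of all minterms of g has width N). *)
Definition UC1 N (g : input N -> bool) : nat :=
  \big[minn/N]_(D : {set pinput N} | is_unamb_dnf_for g D) dnf_width D.

(* Main.v *)
Require Import Defs.
From mathcomp Require Import all_boot.
From mathcomp Require Import zify.
From Stdlib Require Import Lia.
Set Implicit Arguments. Unset Strict Implicit. Unset Printing Implicit Defensive.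

Section Constr.
Variables (n k c : nat) (f : input n -> option bool).
Hypothesis hnk : n <= 2 ^ k.

Local Notation B := {ffun 'I_k -> bool}.
Local Notation U := ('I_k * 'I_c * option 'I_k)%type.
Local Notation V := (('I_k * 'I_n) + (B * U))%type.
Definition N := #|{: V}|.
Definition enc (v : V) : 'I_N := enum_rank v.
Definition dec (j : 'I_N) : V := enum_val j.
Lemma encK : cancel enc dec. Proof. exact: enum_rankK. Qed.
Lemma decK : cancel dec enc. Proof. exact: enum_valK. Qed.

Definition b0 : B := [ffun _ => false].
Definition psi (p : 'I_n) : B := nth b0 (enum {: B}) p.
Lemma psi_inj : injective psi.
Proof.
move=> p q /eqP; rewrite /psi nth_uniq ?enum_uniq //.
  by move/eqP/val_inj.
all: rewrite -cardE card_ffun card_bool card_ord; exact: leq_trans (ltn_ord _) hnk.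
Qed.

Definition good (rho : pinput n) (bb : bool) :=
  (psize rho <= c) && [forall y, consistent rho y ==> (f y == Some bb)].
Definition dom (rho : pinput n) := [set p | rho p != None].
Definition slots (rho : pinput n) : seq (option 'I_n) := [seq Some p | p <- enum (dom rho)].
Definition entry (rho : pinput n) (s : 'I_c) : option 'I_n := nth None (slots rho) s.
Definition code (rho : pinput n) (s : 'I_c) (o : option 'I_k) : bool :=
  match o with
  | None => entry rho s != None
  | Some j => if entry rho s is Some p then psi p j else false
  end.

Definition Tv (b : B) (rhos : {ffun 'I_k -> pinput n}) (v : V) : option bool :=
  match v with
  | inl (i, p) => rhos i p
  | inr (b', (i, s, o)) => if b' == b then Some (code (rhos i) s o) else None
  end.
Definition mkT b rhos : pinput N := [ffun j => Tv b rhos (dec j)].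
Definition Dset : {set pinput N} :=
  [set t | [exists b : B, exists rhos : {ffun 'I_k -> pinput n},
     [forall i, good (rhos i) (b i)] && (t == mkT b rhos)]].
Definition g (w : input N) : bool := [exists t in Dset, consistent t w].
Definition copy (w : input N) (i : 'I_k) : input n := [ffun p => w (enc (inl (i, p)))].

Lemma consistent_mkT b rhos w :
  consistent (mkT b rhos) w =
  [forall v, if Tv b rhos v is Some cc then w (enc v) == cc else true].
Proof.
apply/forallP/forallP => H v.
  by have := H (enc v); rewrite ffunE encK.
by have := H (dec v); rewrite decK ffunE.
Qed.

Lemma mkT_copy b rhos w : consistent (mkT b rhos) w ->
  forall i, consistent (rhos i) (copy w i).
Proof.
rewrite consistent_mkT => /forallP H i; apply/forallP => p.
by have := H (inl (i, p)); rewrite /= ffunE.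
Qed.

Lemma mkT_cheat b rhos w : consistent (mkT b rhos) w ->
  forall i s o, w (enc (inr (b, (i, s, o)))) = code (rhos i) s o.
Proof.
rewrite consistent_mkT => /forallP H i s o.
by have := H (inr (b, (i, s, o))); rewrite /= eqxx => /eqP.
Qed.

Lemma good_val rho bb y : good rho bb -> consistent rho y -> f y = Some bb.
Proof. by case/andP=> _ /forallP H Hy; move: (H y); rewrite Hy => /eqP. Qed.


Lemma slots_nth rho s : (nth None (slots rho) s != None) = (s < size (slots rho)).
Proof.
case: ltnP => Hs; last by rewrite nth_default.
apply/negP => /eqP E.
have : nth None (slots rho) s \in slots rho by exact: mem_nth.
by rewrite E; case/mapP.
Qed.

Lemma size_slots rho : size (slots rho) = psize rho.
Proof. by rewrite size_map -cardE. Qed.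

Lemma code_inj rho1 rho2 : psize rho1 <= c -> psize rho2 <= c ->
  (forall s o, code rho1 s o = code rho2 s o) -> dom rho1 = dom rho2.
Proof.
move=> H1 H2 H.
have He : forall s : 'I_c, entry rho1 s = entry rho2 s.
  move=> s; have := H s None; rewrite /=.
  case E1: (entry rho1 s) => [p1|]; case E2: (entry rho2 s) => [p2|] //= _.
  congr Some; apply: psi_inj; apply/ffunP => j.
  by have := H s (Some j); rewrite /= E1 E2.
have Hn : forall s, s < c -> nth None (slots rho1) s = nth None (slots rho2) s.
  by move=> s Hs; exact: (He (Ordinal Hs)).
have Hsz : size (slots rho1) = size (slots rho2).
  apply/eqP; rewrite eqn_leq; apply/andP; split; rewrite leqNgt; apply/negP => Hlt.
  - have Hs : size (slots rho2) < c by rewrite (leq_trans Hlt) // size_slots.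
    have := slots_nth rho1 (size (slots rho2)); rewrite Hn // slots_nth ltnn Hlt.
    done.
  - have Hs : size (slots rho1) < c by rewrite (leq_trans Hlt) // size_slots.
    have := slots_nth rho2 (size (slots rho1)); rewrite -Hn // slots_nth ltnn Hlt.
    done.
have Es : slots rho1 = slots rho2.
  apply: (eq_from_nth (x0 := None) Hsz) => s Hs; apply: Hn.
  by rewrite (leq_trans Hs) // size_slots.
have Ee : enum (dom rho1) = enum (dom rho2).
  by apply: (inj_map (fun a b (E : Some a = Some b) => let: erefl := E in erefl)).
by apply/setP => p; rewrite -[p \in dom rho1]mem_enum -[p \in dom rho2]mem_enum Ee.
Qed.

Lemma dom_eq_cons rho1 rho2 y : dom rho1 = dom rho2 ->
  consistent rho1 y -> consistent rho2 y -> rho1 = rho2.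
Proof.
move=> Hd /forallP C1 /forallP C2; apply/ffunP => p.
have := C1 p; have := C2 p.
have : (p \in dom rho1) = (p \in dom rho2) by rewrite Hd.
rewrite !inE.
by case: (rho1 p) => [a|]; case: (rho2 p) => [b|] //= _ /eqP <- /eqP <-.
Qed.


Lemma Dset_mem t : t \in Dset -> exists (b : B) (rhos : {ffun 'I_k -> pinput n}),
  (forall i, good (rhos i) (b i)) /\ t = mkT b rhos.
Proof.
rewrite inE => /existsP [b /existsP [rhos /andP [/forallP G /eqP ->]]].
by exists b, rhos.
Qed.

Lemma unamb t1 t2 w : t1 \in Dset -> t2 \in Dset ->
  consistent t1 w -> consistent t2 w -> t1 = t2.
Proof.
case/Dset_mem => b1 [r1 [G1 ->]]; case/Dset_mem => b2 [r2 [G2 ->]] C1 C2.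
have Eb : b1 = b2.
  apply/ffunP => i.
  have := good_val (G1 i) (mkT_copy C1 i).
  by rewrite (good_val (G2 i) (mkT_copy C2 i)) => -[].
subst b2.
have Er : r1 = r2.
  apply/ffunP => i; apply: (dom_eq_cons _ (mkT_copy C1 i) (mkT_copy C2 i)).
  apply: code_inj.
  - by case/andP: (G1 i).
  - by case/andP: (G2 i).
  by move=> s o; rewrite -(mkT_cheat C1) -(mkT_cheat C2).
by rewrite Er.
Qed.

Lemma psize_V (P : pred V) : #|[set j : 'I_N | P (dec j)]| = #|[set v | P v]|.
Proof.
rewrite -(card_imset _ (can_inj decK)); apply: eq_card => v.
rewrite [in RHS]inE; apply/imsetP/idP => [[j]|Pv]; first by rewrite inE => Pj ->.
by exists (enc v); rewrite ?inE encK.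
Qed.

Lemma card_sumb (T : finType) (A : {set T}) : #|A| = \sum_(x : T) nat_of_bool (x \in A).
Proof. by rewrite -sum1_card big_mkcond /=; apply: eq_bigr => x _; case: (x \in A). Qed.

Lemma psize_mkT (b : B) (rhos : {ffun 'I_k -> pinput n}) : (forall i, psize (rhos i) <= c) ->
  psize (mkT b rhos) <= k * c + k * c * k.+1.
Proof.
move=> Hc.
have -> : psize (mkT b rhos) = #|[set v | Tv b rhos v != None]|.
  by rewrite /psize -(psize_V (fun v => Tv b rhos v != None)); apply: eq_card => j; rewrite !inE ffunE.
set Sl := [set ip : 'I_k * 'I_n | rhos ip.1 ip.2 != None].
set Sr := [set bu : B * U | bu.1 == b].
have Hsub : [set v | Tv b rhos v != None] \subset (inl @: Sl) :|: (inr @: Sr).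
  apply/subsetP => -[[i p]|[b' [[i s] o]]]; rewrite !inE /=.
    by move=> H; apply/orP; left; apply/imsetP; exists (i, p); rewrite ?inE.
  case: (b' =P b) => [-> _|_] //=; apply/orP; right; apply/imsetP; exists (b, (i, s, o)) => //.
  by rewrite inE.
apply: (leq_trans (subset_leq_card Hsub)).
apply: (leq_trans (leq_card_setU _ _)).
rewrite !card_imset; try by move=> ? ? [].
apply: leq_add.
  rewrite card_sumb.
  rewrite (eq_bigr (fun ip : 'I_k * 'I_n => nat_of_bool (rhos ip.1 ip.2 != None))); last first.
    by move=> ip _; rewrite inE.
  rewrite -(pair_big xpredT xpredT (fun i p => nat_of_bool (rhos i p != None))) /=.
  apply: (@leq_trans (\sum_(i < k) c)); last by rewrite sum_nat_const card_ord mulnC.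
  apply: leq_sum => i _; apply: leq_trans (Hc i).
  by rewrite /psize card_sumb; apply: eq_leq; apply: eq_bigr => p _; rewrite inE.
have -> : Sr = [set (b, u) | u in [set: U]].
  apply/setP => -[b' u]; rewrite !inE /=; apply/eqP/imsetP => [-> | [u' _ [-> _]]] //.
  by exists u; rewrite ?inE.
rewrite card_imset; last by move=> ? ? [].
by rewrite cardsT !card_prod !card_ord card_option card_ord.
Qed.


Variables (x : input n) (m : nat).
Hypothesis hx : f x = None.
Hypothesis hk : 0 < k.
Hypothesis hmn : m <= n.
Hypothesis hcert : forall bb y, f y = Some bb -> exists rho, consistent rho y && good rho bb.
Hypothesis hesc : forall bb (r : pinput n), consistent r x -> psize r < m ->
  exists y, consistent r y && (f y == Some bb).

Definition w0 : input N :=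
  [ffun j => match dec j with inl (i, p) => x p | inr _ => false end].

Lemma g_w0 : g w0 = false.
Proof.
apply/existsP => -[t /andP [/Dset_mem [b [rhos [G ->]]] C]].
have := good_val (G (Ordinal hk)) (mkT_copy C (Ordinal hk)).
have -> : copy w0 (Ordinal hk) = x by apply/ffunP => p; rewrite !ffunE encK.
by rewrite hx.
Qed.

Lemma cert_big (rho : pinput N) : is_cert (as_partial g) S0 rho w0 -> m <= psize rho.
Proof.
case/andP => Cw0 /forallP Hall.
rewrite leqNgt; apply/negP => Hlt.
set S := [set j | rho j != None].
pose h (j : 'I_N) : B := match dec j with inr (b', _) => b' | inl _ => b0 end.
have : 0 < #|~: (h @: S)|.
  have := cardsC (h @: S); rewrite card_ffun card_bool card_ord => E.
  have : #|h @: S| < 2 ^ k.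
    apply: leq_ltn_trans (leq_imset_card _ _) _.
    exact: leq_trans Hlt (leq_trans hmn hnk).
  by rewrite -E lt0n; apply: contraL => /eqP ->; rewrite addn0 ltnn.
case/card_gt0P => b; rewrite inE => Hb.
pose rr (i : 'I_k) : pinput n := [ffun p => rho (enc (inl (i, p)))].
have Hrr : forall i, psize (rr i) < m.
  move=> i; apply: leq_ltn_trans Hlt.
  rewrite /psize -(card_imset _ (f := fun p => enc (inl (i, p)))); last first.
    by move=> p q /(can_inj encK) [].
  apply: subset_leq_card; apply/subsetP => j /imsetP [p]; rewrite !inE ffunE => H ->.
  exact: H.
have Crr : forall i, consistent (rr i) x.
  move=> i; apply/forallP => p; rewrite ffunE.
  move/forallP: Cw0 => /(_ (enc (inl (i, p)))); rewrite ffunE encK.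
  by case: (rho _).
pose ys (i : 'I_k) : input n :=
  odflt x [pick y | consistent (rr i) y && (f y == Some (b i))].
have Hys : forall i, consistent (rr i) (ys i) && (f (ys i) == Some (b i)).
  move=> i; rewrite /ys; case: pickP => [y //|H0].
  have [y Hy] := hesc (b i) (Crr i) (Hrr i).
  by move: (H0 y); rewrite Hy.
pose rhos : {ffun 'I_k -> pinput n} :=
  [ffun i => odflt [ffun _ => None] [pick r | consistent r (ys i) && good r (b i)]].
have Hrhos : forall i, consistent (rhos i) (ys i) && good (rhos i) (b i).
  move=> i; rewrite /rhos ffunE; case: pickP => [r //|H0].
  have /andP [_ /eqP Hf] := Hys i.
  have [r Hr] := hcert Hf.
  by move: (H0 r); rewrite Hr.
pose w : input N := [ffun j => match dec j with
  | inl (i, p) => ys i p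
  | inr (b', (i, s, o)) => if b' == b then code (rhos i) s o else false end].
have wE : forall v, w (enc v) = match v with
  | inl (i, p) => ys i p
  | inr (b', (i, s, o)) => if b' == b then code (rhos i) s o else false end.
  by move=> v; rewrite /w ffunE encK.
have Ct : consistent (mkT b rhos) w.
  rewrite consistent_mkT; apply/forallP => -[[i p]|[b' [[i s] o]]] /=; rewrite wE.
    have /andP [/forallP C _] := Hrhos i.
    by have := C p.
  by case: (b' =P b) => //= ->; rewrite eqxx.
have Cr : consistent rho w.
  apply/forallP => j; move/forallP: Cw0 => /(_ j).
  rewrite !ffunE.
  case Ej: (dec j) => [[i p]|[b' [[i s] o]]].
    case Erj: (rho j) => [cc|] // _.
    have /andP [/forallP C _] := Hys i.
    have := C p; rewrite ffunE -Ej decK Erj //.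
  case Erj: (rho j) => [cc|] // H.
  have : b' \in h @: S by apply/imsetP; exists j; rewrite ?inE ?Erj // /h Ej.
  by move=> Hb'; case: (b' =P b) => [E|//]; move: Hb; rewrite -E Hb'.
have Hgw : g w.
  apply/existsP; exists (mkT b rhos); rewrite Ct andbT inE.
  apply/existsP; exists b; apply/existsP; exists rhos; rewrite eqxx andbT.
  by apply/forallP => i; case/andP: (Hrhos i).
by move: (Hall w); rewrite Cr /= /as_partial Hgw.
Qed.

End Constr.

Lemma N_card n k c : N n k c = k * n + 2 ^ k * (k * c * k.+1).
Proof. by rewrite /N card_sum !card_prod card_ffun card_bool !card_ord card_option card_ord. Qed.

Lemma bigmin_le (T : finType) (P : pred T) (F : T -> nat) d i :
  P i -> \big[minn/d]_(j | P j) F j <= F i.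
Proof.
move=> Pi; have : i \in index_enum T by rewrite mem_index_enum.
elim: (index_enum T) => // a r IH; rewrite inE big_cons => /orP [/eqP <-|Hi].
  by rewrite Pi geq_minl.
case: (P a); last exact: IH.
exact: leq_trans (geq_minr _ _) (IH Hi).
Qed.

Lemma Cx_le_n n (f : input n -> option bool) Sig y : Cx f Sig y <= n.
Proof.
rewrite /Cx; elim/big_ind: _ => //.
  by move=> a b Ha _; rewrite (leq_trans (geq_minl _ _)).
by move=> rho _; rewrite /psize; apply: leq_trans (max_card _) _; rewrite card_ord.
Qed.

Lemma Cf_le_n n (f : input n -> option bool) Sig : Cf f Sig <= n.
Proof. by apply/bigmax_leqP => y _; exact: Cx_le_n. Qed.

Lemma Cmax_le_n n (f : input n -> option bool) : Cmax f <= n.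
Proof. by rewrite /Cmax geq_max !Cf_le_n. Qed.

Lemma Cx_witness n (f : input n -> option bool) (Sig : pred (option bool)) y :
  Sig (f y) -> exists rho, is_cert f Sig rho y && (psize rho <= Cx f Sig y).
Proof.
move=> Sy; rewrite /Cx; elim/big_ind: _.
- exists [ffun i => Some (y i)].
  have -> : psize [ffun i => Some (y i)] <= n by rewrite /psize; apply: leq_trans (max_card _) _; rewrite card_ord.
  rewrite andbT.
  apply/andP; split; first by apply/forallP => i; rewrite ffunE.
  apply/forallP => y'; apply/implyP => /forallP H.
  have -> : y' = y by apply/ffunP => i; have := H i; rewrite ffunE => /eqP.
  exact: Sy.
- move=> a b [r1 /andP [H1 Ha]] [r2 /andP [H2 Hb]]; case: (leqP a b) => Hab.
    by exists r1; rewrite H1.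
  by exists r2; rewrite H2.
- by move=> r Hr; exists r; rewrite Hr leqnn.
Qed.

Lemma cert_exists n (f : input n -> option bool) bb y : f y = Some bb ->
  exists rho, consistent rho y && good (Cmax f) f rho bb.
Proof.
move=> Hf.
have key : forall Sig : pred (option bool), Sig (f y) ->
    (forall v, Sig v -> v = Some bb) -> Cf f Sig <= Cmax f ->
    exists rho, consistent rho y && good (Cmax f) f rho bb.
  move=> Sig Sy HS Hle.
  have [rho /andP [/andP [Cr /forallP Hc] Hs]] := @Cx_witness _ f Sig y Sy.
  exists rho; rewrite Cr /= /good; apply/andP; split.
    apply: (leq_trans Hs); apply: (leq_trans _ Hle).
    exact: (@leq_bigmax_cond _ (fun y => Sig (f y)) (Cx f Sig) y Sy).
  apply/forallP => y'; apply/implyP => Cy; have := Hc y'; rewrite Cy /=.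
  by move/HS => ->.
case: bb Hf key => Hf key.
  apply: (key S1); first by rewrite Hf.
    by move=> v /eqP.
  exact: leq_maxr.
apply: (key S0); first by rewrite Hf.
  by move=> v /eqP.
exact: leq_maxl.
Qed.

Lemma escape0 n (f : input n -> option bool) x (Sig : pred (option bool)) (r : pinput n) :
  consistent r x -> psize r < Cx f Sig x -> exists y, consistent r y && ~~ Sig (f y).
Proof.
move=> Cr Hlt.
have : ~~ is_cert f Sig r x.
  apply/negP => Hc; move: Hlt; rewrite ltnNge.
  by rewrite /Cx (@bigmin_le _ (fun rho => is_cert f Sig rho x) (@psize n) n r Hc).
rewrite /is_cert Cr /= negb_forall => /existsP [y]; rewrite negb_imply => /andP [Cy Hy].
by exists y; rewrite Cy.
Qed.

Lemma escape n (f : input n -> option bool) x bb (r : pinput n) :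
  consistent r x -> psize r < minn (Cx f Sbar0 x) (Cx f Sbar1 x) ->
  exists y, consistent r y && (f y == Some bb).
Proof.
move=> Cr Hlt; case: bb.
  have [y /andP [Cy Hy]] := @escape0 _ f x Sbar1 r Cr (leq_trans Hlt (geq_minr _ _)).
  by exists y; rewrite Cy; move: Hy; rewrite /= negbK.
have [y /andP [Cy Hy]] := @escape0 _ f x Sbar0 r Cr (leq_trans Hlt (geq_minl _ _)).
by exists y; rewrite Cy; move: Hy; rewrite /= negbK.
Qed.

Theorem theorem2p2 (n k : nat) (hn : 2 <= n) (hk : n = 2 ^ k)
    (f : input n -> option bool) (x : input n) (hx : f x = None) :
  exists (N : nat) (g : input N -> bool),
    [/\ N <= 3 * n ^ 2 * k ^ 2,
        minn (Cx f Sbar0 x) (Cx f Sbar1 x) <= C0 g &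
        UC1 g <= 3 * Cmax f * k ^ 2].
Proof.
set c := Cmax f.
set m := minn (Cx f Sbar0 x) (Cx f Sbar1 x).
have hnk : n <= 2 ^ k by rewrite hk.
have hk0 : 0 < k by rewrite lt0n; apply/eqP => E; move: hn; rewrite hk E.
have hmn : m <= n by apply: leq_trans (geq_minl _ _) (Cx_le_n _ _ _).
have hcn : c <= n by exact: Cmax_le_n.
exists (N n k c), (g f); split.
- rewrite N_card -hk.
  have H1 : k * n <= n ^ 2 * k ^ 2.
    by rewrite mulnC -!mulnn; nia.
  have H2 : n * (k * c * k.+1) <= 2 * (n ^ 2 * k ^ 2).
    have hk2 : k.+1 <= 2 * k by lia.
    apply: (leq_trans (leq_mul (leqnn n) (leq_mul (leq_mul (leqnn k) hcn) hk2))).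
    by apply: eq_leq; rewrite -!mulnn; lia.
  nia.
- rewrite /C0 /Cf.
  apply: (leq_trans _ (@leq_bigmax_cond _ (fun w => S0 (as_partial (g f) w)) (Cx (as_partial (g f)) S0) (w0 k c x) _)); last first.
    by rewrite /= /as_partial (g_w0 c hx hk0).
  rewrite /Cx; elim/big_ind: _.
  + rewrite N_card; apply: leq_trans hmn _; nia.
  + by move=> a b Ha Hb; rewrite leq_min Ha Hb.
  + move=> rho Hr; apply: (cert_big hnk hmn _ _ Hr).
      by move=> bb y; exact: cert_exists.
    by move=> bb r; exact: escape.
- rewrite /UC1.
  apply: leq_trans (bigmin_le _ _ (i := Dset k c f) _) _.
    apply/forallP => w; rewrite eqxx /=.
    apply/card_le1_eqP => t1 t2 /setIdP [D1 C1] /setIdP [D2 C2].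
    exact: (unamb hnk D2 D1 C2 C1).
  apply/bigmax_leqP => t /Dset_mem [b [rhos [G ->]]].
  apply: leq_trans (psize_mkT _ (rhos := rhos) _) _.
    by move=> i; case/andP: (G i).
  nia.
Qed.
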